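(* Let $(\mathfrak g,[\cdot,\cdot],\llbracket\cdot,\cdot,\cdot\rrbracket)$ and $(\mathfrak g^*,[\cdot,\cdot]_*,\llbracket\cdot,\cdot,\cdot\rrbracket_* )$ be Lie-Yamaguti algebras (on a vector space and its dual). Then the quadruple $(\mathfrak g,\mathfrak g^*;(\mathrm{ad}^*,-\mathcal R^*\tau),(\mathfrak{ad}^*,-\mathfrak R^*\tau))$ is a matched pair of Lie-Yamaguti algebras (i.e. the double brackets below define a Lie-Yamaguti algebra on $\mathfrak g\oplus\mathfrak g^*$) if and only if there is a Lie-Yamaguti algebra structure on $\mathfrak g\oplus\mathfrak g^*$ for which $((\mathfrak g\oplus\mathfrak g^*,\mathcal B_0),\mathfrak g,\mathfrak g^* )$ is a Manin triple, where $\mathcal B_0(x+\xi,y+\eta)=\langle x,\eta\rangle+\langle\xi,y\rangle$ (in which case that structure is given by the double brackets).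
   Context: All vector spaces are finite-dimensional over a field of characteristic zero. A Lie-Yamaguti algebra is a vector space $\mathfrak g$ with a skew-symmetric bilinear map $[\cdot,\cdot]$ and a trilinear map $\llbracket\cdot,\cdot,\cdot\rrbracket$ skew-symmetric in its first two arguments satisfying: (LY1) $[[x,y],z]+[[y,z],x]+[[z,x],y]+\llbracket x,y,z\rrbracket+\llbracket y,z,x\rrbracket+\llbracket z,x,y\rrbracket=0$; (LY2) $\llbracket [x,y],z,w\rrbracket+\llbracket [y,z],x,w\rrbracket+\llbracket [z,x],y,w\rrbracket=0$; (LY3) $\llbracket x,y,[z,w]\rrbracket=[\llbracket x,y,z\rrbracket,w]+[z,\llbracket x,y,w\rrbracket]$; (LY4) $\llbracket x,y,\llbracket z,w,t\rrbracket\rrbracket=\llbracket\llbracket x,y,z\rrbracket,w,t\rrbracket+\llbracket z,\llbracket x,y,w\rrbracket,t\rrbracket+\llbracket z,w,\llbracket x,y,t\rrbracket\rrbracket$. Coadjoint maps: on $\mathfrak g^*$, $\langle\mathrm{ad}^*_x\alpha,z\rangle=-\langle\alpha,[x,z]\rangle$, $\langle\mathcal R^*(x,y)\alpha,z\rangle=-\langle\alpha,\llbracket z,x,y\rrbracket\rangle$, $\langle\mathcal L^*(x,y)\alpha,z\rangle=-\langle\alpha,\llbracket x,y,z\rrbracket\rangle$; on $\mathfrak g$, $\langle\mathfrak{ad}^*_\xi x,\eta\rangle=-\langle x,[\xi,\eta]_*\rangle$, $\langle\mathfrak R^*(\xi,\eta)x,\zeta\rangle=-\langle x,\llbracket\zeta,\xi,\eta\rrbracket_*\rangle$,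 $\langle\mathfrak L^*(\xi,\eta)x,\zeta\rangle=-\langle x,\llbracket\xi,\eta,\zeta\rrbracket_*\rangle$. ($-\mathcal R^*\tau$ means $(x,y)\mapsto-\mathcal R^*(y,x)$, similarly for $-\mathfrak R^*\tau$.) The double brackets on $\mathfrak g\oplus\mathfrak g^*$ are $[x+\xi,y+\eta]=[x,y]+\mathrm{ad}^*_x\eta-\mathrm{ad}^*_y\xi+[\xi,\eta]_*+\mathfrak{ad}^*_\xi y-\mathfrak{ad}^*_\eta x$ and $\llbracket x+\xi,y+\eta,z+\zeta\rrbracket=\llbracket x,y,z\rrbracket+\mathcal L^*(x,y)\zeta-\mathcal R^*(z,y)\xi+\mathcal R^*(z,x)\eta+\llbracket\xi,\eta,\zeta\rrbracket_*+\mathfrak L^*(\xi,\eta)z-\mathfrak R^*(\zeta,\eta)x+\mathfrak R^*(\zeta,\xi)y$; the quadruple is called a matched pair when these form a Lie-Yamaguti algebra. A quadratic Lie-Yamaguti algebra $(\mathfrak h,\mathcal B)$ is a Lie-Yamaguti algebra with a nondegenerate symmetric bilinear form with $\mathcal B([x,y],z)=-\mathcal B(y,[x,z])$ and $\mathcal B(\llbracket x,y,z\rrbracket,w)=\mathcal B(x,\llbracket w,z,y\rrbracket)$. A Manin triple $((\mathfrak h,\mathcal B),\mathfrak h_1,\mathfrak h_2)$ is a quadratic Lie-Yamaguti algebra with $\mathfrak h=\mathfrak h_1\oplus\mathfrak h_2$, where $\mathfrak h_1,\mathfrak h_2$ are isotropic subalgebras (carrying their given structures), and for all $x_1,y_1\in\mathfrak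 h_1$, $x_2,y_2\in\mathfrak h_2$: $\mathrm{pr}_1\llbracket x_1,y_1,x_2\rrbracket=\mathrm{pr}_1\llbracket x_1,x_2,y_1\rrbracket=\mathrm{pr}_2\llbracket x_2,y_2,x_1\rrbracket=\mathrm{pr}_2\llbracket x_2,x_1,y_2\rrbracket=0$ ($\mathrm{pr}_i$ the projections onto $\mathfrak h_i$). *)

(* Defs.v *)
From HB Require Import structures.
From mathcomp Require Import all_boot all_order all_algebra.
Set Implicit Arguments. Unset Strict Implicit. Unset Printing Implicit Defensive.
Import Order.TTheory GRing.Theory Num.Theory.
Local Open Scope ring_scope.

Section LY.
Variables (F : fieldType) (V : lmodType F).

Definition bilinear_map (br : V -> V -> V) : Prop :=
  forall (a : F) (x y z : V),
    br (a *: x + y) z = a *: br x z + br y z /\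
    br z (a *: x + y) = a *: br z x + br z y.

Definition trilinear_map (tr : V -> V -> V -> V) : Prop :=
  forall (a : F) (x y u v : V),
    [/\ tr (a *: x + y) u v = a *: tr x u v + tr y u v,
        tr u (a *: x + y) v = a *: tr u x v + tr u y v &
        tr u v (a *: x + y) = a *: tr u v x + tr u v y].

Definition LieYamaguti (br : V -> V -> V) (tr : V -> V -> V -> V) : Prop :=
  bilinear_map br /\ trilinear_map tr /\
      (forall x y, br x y = - br y x) /\
      (forall x y z, tr x y z = - tr y x z) /\
      (forall x y z,
         br (br x y) z + br (br y z) x + br (br z x) y
         + tr x y z + tr y z x + tr z x y = 0) /\
      (forall x y z w,
         tr (br x y) z w + tr (br y z) x w + tr (br z x) y w = 0) /\
      (forall x y z w,
         tr x y (br z w) = br (tr x y z) w + br z (tr x y w)) /\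
      (forall x y z w t,
         tr x y (tr z w t) =
         tr (tr x y z) w t + tr z (tr x y w) t + tr z w (tr x y t)).

Definition quadraticLY (br : V -> V -> V) (tr : V -> V -> V -> V)
  (B : V -> V -> F) : Prop :=
  LieYamaguti br tr /\
      (forall (a : F) x y z, B (a *: x + y) z = a * B x z + B y z) /\
      (forall x y, B x y = B y x) /\
      (forall x, (forall y, B x y = 0) -> x = 0) /\
      (forall x y z, B (br x y) z = - B y (br x z)) /\
      (forall x y z w, B (tr x y z) w = B x (tr w z y)).
End LY.

Section Dual.
Variables (F : fieldType) (n : nat).
Local Notation V := 'rV[F]_n.

(* g = F^n and g^dual = F^n, identified through the standard pairing
   <x, xi> = sum_i x_i xi_i (dual basis). *)
Definition pairing (u v : V) : F := \sum_(i < n) u 0 i * v 0 i.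

Definition basisv (j : 'I_n) : V := delta_mx 0 j.

(* coadjoint maps: the unique vectors with
   <ad^dual_x a, z> = - <a, [x,z]>,
   <R^dual(x,y) a, z> = - <a, [[z,x,y]]>,
   <L^dual(x,y) a, z> = - <a, [[x,y,z]]>  (written in coordinates). *)
Definition coad (br : V -> V -> V) (x a : V) : V :=
  \row_j (- pairing a (br x (basisv j))).
Definition coR (tr : V -> V -> V -> V) (x y a : V) : V :=
  \row_j (- pairing a (tr (basisv j) x y)).
Definition coL (tr : V -> V -> V -> V) (x y a : V) : V :=
  \row_j (- pairing a (tr x y (basisv j))).

Local Notation D := (V * V)%type.

(* The double brackets on g (+) g^dual; first component in g, second in g^dual.
   br, tr : structure on g ; brs, trs : structure on g^dual. *)
Definition dbl_br (br brs : V -> V -> V) (u v : D) : D :=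
  let: (x, xi) := u in let: (y, eta) := v in
  (br x y + coad brs xi y - coad brs eta x,
   coad br x eta - coad br y xi + brs xi eta).

Definition dbl_tr (tr trs : V -> V -> V -> V) (u v w : D) : D :=
  let: (x, xi) := u in let: (y, eta) := v in let: (z, zeta) := w in
  (tr x y z + coL trs xi eta z - coR trs zeta eta x + coR trs zeta xi y,
   coL tr x y zeta - coR tr z y xi + coR tr z x eta + trs xi eta zeta).

Definition matched_pair (br : V -> V -> V) (tr : V -> V -> V -> V)
  (brs : V -> V -> V) (trs : V -> V -> V -> V) : Prop :=
  LieYamaguti (dbl_br br brs) (dbl_tr tr trs).

Definition B0 (u v : D) : F := pairing u.1 v.2 + pairing u.2 v.1.

Definition manin_triple (br : V -> V -> V) (tr : V -> V -> V -> V)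
  (brs : V -> V -> V) (trs : V -> V -> V -> V)
  (b : D -> D -> D) (t : D -> D -> D -> D) : Prop :=
  quadraticLY b t B0 /\
      (forall x y : V, B0 (x, 0) (y, 0) = 0) /\
      (forall xi eta : V, B0 (0, xi) (0, eta) = 0) /\
      (forall x y, b (x, 0) (y, 0) = (br x y, 0)) /\
      (forall x y z, t (x, 0) (y, 0) (z, 0) = (tr x y z, 0)) /\
      (forall xi eta, b (0, xi) (0, eta) = (0, brs xi eta)) /\
      (forall xi eta zeta, t (0, xi) (0, eta) (0, zeta) = (0, trs xi eta zeta)) /\
      (forall (x1 y1 x2 y2 : V),
         [/\ (t (x1, 0) (y1, 0) (0, x2)).1 = 0,
             (t (x1, 0) (0, x2) (y1, 0)).1 = 0,
             (t (0, x2) (0, y2) (x1, 0)).2 = 0 &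
             (t (0, x2) (x1, 0) (0, y2)).2 = 0]).
End Dual.

(* Main.v *)
Require Import Defs.
From HB Require Import structures.
From mathcomp Require Import all_boot all_order all_algebra.
From mathcomp Require Import ring.
From Stdlib Require Import FunctionalExtensionality.
Import Order.TTheory GRing.Theory Num.Theory.
Local Open Scope ring_scope.
Set Implicit Arguments. Unset Strict Implicit.

Definition glin (K : fieldType) (W W' : lmodType K) (f : W -> W') :=
  forall (a : K) x y, f (a *: x + y) = a *: f x + f y.
Notation lin := (@glin _ _ _).

Section Gen.
Variables (K : fieldType) (W W' : lmodType K).
Implicit Types (f : W -> W').
Lemma lin0 f : lin f -> f 0 = 0.
Proof. move=> h; have e := h 1 0 0; rewrite !scale1r addr0 in e.
by apply: (addIr (f 0)); rewrite add0r -e. Qed.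
Lemma linD f : lin f -> forall x y, f (x + y) = f x + f y.
Proof. by move=> h x y; rewrite -{1}(scale1r x) h scale1r. Qed.
Lemma linZ f : lin f -> forall a x, f (a *: x) = a *: f x.
Proof. by move=> h a x; rewrite -(addr0 (a *: x)) h lin0 // addr0. Qed.
Lemma linN f : lin f -> forall x, f (- x) = - f x.
Proof. by move=> h x; rewrite -scaleN1r linZ // scaleN1r. Qed.

Lemma bl_l (br : W -> W -> W) : bilinear_map br -> forall z, lin (br ^~ z).
Proof. by move=> h z a x y; case: (h a x y z). Qed.
Lemma bl_r (br : W -> W -> W) : bilinear_map br -> forall z, lin (br z).
Proof. by move=> h z a x y; case: (h a x y z). Qed.
Lemma tl_1 (tr : W -> W -> W -> W) : trilinear_map tr -> forall u v, lin (fun x => tr x u v).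
Proof. by move=> h u v a x y; case: (h a x y u v). Qed.
Lemma tl_2 (tr : W -> W -> W -> W) : trilinear_map tr -> forall u v, lin (fun x => tr u x v).
Proof. by move=> h u v a x y; case: (h a x y u v). Qed.
Lemma tl_3 (tr : W -> W -> W -> W) : trilinear_map tr -> forall u v, lin (tr u v).
Proof. by move=> h u v a x y; case: (h a x y u v). Qed.
End Gen.

Section S.
Variables (F : fieldType) (n : nat).
Local Notation V := 'rV[F]_n.
Implicit Types (u v w z : V).

Lemma lin_sum (f : V -> V) : lin f -> forall (c : 'I_n -> F) (v : 'I_n -> V),
  f (\sum_j c j *: v j) = \sum_j c j *: f (v j).
Proof.
move=> h c v; elim/big_rec2: _ => [|j y1 y2 _ <-]; first exact: lin0.
by rewrite h.
Qed.

Lemma pairingC u v : pairing u v = pairing v u.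
Proof. by apply: eq_bigr => i _; rewrite mulrC. Qed.
Lemma pairingDl u v w : pairing (u + v) w = pairing u w + pairing v w.
Proof. by rewrite /pairing -big_split; apply: eq_bigr => i _; rewrite mxE mulrDl. Qed.
Lemma pairingZl (a : F) u w : pairing (a *: u) w = a * pairing u w.
Proof. by rewrite /pairing mulr_sumr; apply: eq_bigr => i _; rewrite mxE mulrA. Qed.
Lemma pairingNl u w : pairing (- u) w = - pairing u w.
Proof. by rewrite -scaleN1r pairingZl mulN1r. Qed.
Lemma pairing0l w : pairing 0 w = 0.
Proof. by rewrite -(scale0r 0) pairingZl mul0r. Qed.
Lemma pairingDr u v w : pairing w (u + v) = pairing w u + pairing w v.
Proof. by rewrite !(pairingC w) pairingDl. Qed.
Lemma pairingNr u w : pairing w (- u) = - pairing w u.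
Proof. by rewrite !(pairingC w) pairingNl. Qed.
Lemma pairingZr (a : F) u w : pairing w (a *: u) = a * pairing w u.
Proof. by rewrite !(pairingC w) pairingZl. Qed.
Lemma pairing0r w : pairing w 0 = 0.
Proof. by rewrite pairingC pairing0l. Qed.
Lemma pairing_basis u j : pairing u (basisv F j) = u 0 j.
Proof.
rewrite /pairing (bigD1 j) //= big1 ?addr0; first by rewrite mxE !eqxx mulr1.
by move=> i /negPf hij; rewrite mxE eqxx hij mulr0.
Qed.
Lemma pairing_eq u v : (forall z, pairing u z = pairing v z) -> u = v.
Proof. by move=> h; apply/rowP => j; rewrite -!pairing_basis h. Qed.

Lemma pairing_sumr (a : V) (c : 'I_n -> F) (v : 'I_n -> V) :
  pairing a (\sum_j c j *: v j) = \sum_j c j * pairing a (v j).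
Proof.
rewrite (big_morph (pairing a) (fun u v => pairingDr u v a) (pairing0r a)).
by apply: eq_bigr => j _; rewrite pairingZr.
Qed.

Lemma row_pair (f : V -> V) (a z : V) : lin f ->
  pairing (\row_j (- pairing a (f (basisv F j)))) z = - pairing a (f z).
Proof.
move=> h; rewrite {2}(row_sum_delta z) lin_sum // pairing_sumr.
rewrite {1}/pairing -sumrN; apply: eq_bigr => i _; rewrite mxE /basisv.
by rewrite mulrC mulrN.
Qed.

Lemma coad_pl (br : V -> V -> V) x a z : bilinear_map br ->
  pairing (coad br x a) z = - pairing a (br x z).
Proof. by move=> h; apply: row_pair; apply: bl_r. Qed.
Lemma coR_pl (tr : V -> V -> V -> V) x y a z : trilinear_map tr ->
  pairing (coR tr x y a) z = - pairing a (tr z x y).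
Proof. by move=> h; apply: (row_pair (f := fun z => tr z x y)); apply: tl_1. Qed.
Lemma coL_pl (tr : V -> V -> V -> V) x y a z : trilinear_map tr ->
  pairing (coL tr x y a) z = - pairing a (tr x y z).
Proof. by move=> h; apply: row_pair; apply: tl_3. Qed.
Lemma coad_pr (br : V -> V -> V) x a z : bilinear_map br ->
  pairing z (coad br x a) = - pairing a (br x z).
Proof. by move=> h; rewrite pairingC coad_pl. Qed.
Lemma coR_pr (tr : V -> V -> V -> V) x y a z : trilinear_map tr ->
  pairing z (coR tr x y a) = - pairing a (tr z x y).
Proof. by move=> h; rewrite pairingC coR_pl. Qed.
Lemma coL_pr (tr : V -> V -> V -> V) x y a z : trilinear_map tr ->
  pairing z (coL tr x y a) = - pairing a (tr x y z).
Proof. by move=> h; rewrite pairingC coL_pl. Qed.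

Lemma addpE (a b c d : V) : (a,b)+(c,d) = (a+c,b+d). Proof. by []. Qed.
Lemma opppE (a b : V) : - (a,b) = (-a,-b). Proof. by []. Qed.
Lemma scalepE (k : F) (a b : V) : k *: (a,b) = (k *: a,k *: b). Proof. by []. Qed.
Lemma zeropE : (0 : (V * V)%type) = (0,0). Proof. by []. Qed.
Lemma decomp (a b : V) : (a, b) = (a, 0) + (0, b).
Proof. by rewrite addpE addr0 add0r. Qed.
Lemma pair_eq (p q : (V * V)%type) : p.1 = q.1 -> p.2 = q.2 -> p = q.
Proof. by case: p; case: q => ? ? ? ? /= -> ->. Qed.

Lemma Bg (p : (V * V)%type) z : B0 p (z, 0) = pairing p.2 z.
Proof. by rewrite /B0 /= pairing0r add0r. Qed.
Lemma Bd (p : (V * V)%type) z : B0 p (0, z) = pairing p.1 z.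
Proof. by rewrite /B0 /= pairing0r addr0. Qed.
Lemma gB (p : (V * V)%type) z : B0 (z, 0) p = pairing z p.2.
Proof. by rewrite /B0 /= pairing0l addr0. Qed.
Lemma dB (p : (V * V)%type) z : B0 (0, z) p = pairing z p.1.
Proof. by rewrite /B0 /= pairing0l add0r. Qed.
Lemma BNl (p q : (V * V)%type) : B0 (- p) q = - B0 p q.
Proof. by case: p => ? ?; rewrite opppE /B0 /= !pairingNl opprD. Qed.
Lemma BNr (p q : (V * V)%type) : B0 q (- p) = - B0 q p.
Proof. by case: p => ? ?; rewrite opppE /B0 /= !pairingNr opprD. Qed.

Lemma uniq_b (br brs : V -> V -> V) (tr trs : V -> V -> V -> V) b t :
  LieYamaguti br tr -> LieYamaguti brs trs -> manin_triple br tr brs trs b t ->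
  b = dbl_br br brs.
Proof.
move=> [hbl _] [hbls _].
move=> [[[hb [ht [sb [st _]]]] [_ [symB [_ [ib it]]]]] [_ [_ [bg [tg [bd [td proj]]]]]]].
have m1 : forall x eta, b (x, 0) (0, eta) = (- coad brs eta x, coad br x eta).
  move=> x eta; apply: pair_eq => /=; apply: pairing_eq => z.
    rewrite -Bd sb BNl ib bd gB /= pairingNl coad_pl // !opprK.
  by rewrite -Bg ib bg dB /= coad_pl.
apply: functional_extensionality => -[x xi]; apply: functional_extensionality => -[y eta].
transitivity (b ((x,0)+(0,xi)) ((y,0)+(0,eta))); first by rewrite -!decomp.
rewrite (linD (bl_l hb _)) !(linD (bl_r hb _)) (sb (0, xi)) !m1 bg bd !addpE !opppE /dbl_br.
congr pair; apply/rowP => j; rewrite !mxE; ring.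
Qed.

Lemma uniq_t (br brs : V -> V -> V) (tr trs : V -> V -> V -> V) b t :
  LieYamaguti br tr -> LieYamaguti brs trs -> manin_triple br tr brs trs b t ->
  t = dbl_tr tr trs.
Proof.
move=> [_ [htl _]] [_ [htls _]].
move=> [[[hb [ht [sb [st _]]]] [_ [symB [_ [ib it]]]]] [_ [_ [bg [tg [bd [td proj]]]]]]].
have mA : forall x y z, t (x, 0) (y, 0) (0, z) = (0, coL tr x y z).
  move=> x y z; apply: pair_eq => /=; first by case: (proj x y z 0).
  apply: pairing_eq => w.
  rewrite -Bg it (st (w, 0)) BNr symB it tg dB /= coL_pl //.
have mC : forall xi eta z, t (0, xi) (0, eta) (z, 0) = (coL trs xi eta z, 0).
  move=> xi eta z; apply: pair_eq => /=; last by case: (proj z 0 xi eta).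
  apply: pairing_eq => w.
  rewrite -Bd it (st (0, w)) BNr symB it td gB /= coL_pl //.
have mB : forall x eta z, t (x, 0) (0, eta) (z, 0) = (0, coR tr z x eta).
  move=> x eta z; apply: pair_eq => /=; first by case: (proj x z eta 0).
  apply: pairing_eq => w.
  by rewrite -Bg it mA gB /= pairingC coL_pl // coR_pl.
have mD : forall xi y zeta, t (0, xi) (y, 0) (0, zeta) = (coR trs zeta xi y, 0).
  move=> xi y zeta; apply: pair_eq => /=; last by case: (proj y 0 xi zeta).
  apply: pairing_eq => w.
  by rewrite -Bd it mC dB /= pairingC coL_pl // coR_pl.
apply: functional_extensionality => -[x xi]; apply: functional_extensionality => -[y eta].
apply: functional_extensionality => -[z zeta].
transitivity (t ((x,0)+(0,xi)) ((y,0)+(0,eta)) ((z,0)+(0,zeta))); first by rewrite -!decomp.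
rewrite (linD (tl_1 ht _ _)) !(linD (tl_2 ht _ _)) !(linD (tl_3 ht _ _)).
rewrite (st (x, 0) (0, eta) (0, zeta)) (st (0, xi) (y, 0) (z, 0)).
rewrite tg td !mA !mB !mC !mD !opppE !addpE /dbl_tr.
congr pair; apply/rowP => j; rewrite !mxE; ring.
Qed.

Lemma coad_0a (br : V -> V -> V) x : coad br x 0 = 0.
Proof. by apply/rowP => j; rewrite !mxE pairing0l oppr0. Qed.
Lemma coad_0x (br : V -> V -> V) a : bilinear_map br -> coad br 0 a = 0.
Proof. by move=> h; apply/rowP => j; rewrite !mxE (lin0 (bl_l h _)) pairing0r oppr0. Qed.
Lemma coR_0a (tr : V -> V -> V -> V) x y : coR tr x y 0 = 0.
Proof. by apply/rowP => j; rewrite !mxE pairing0l oppr0. Qed.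
Lemma coR_01 (tr : V -> V -> V -> V) y a : trilinear_map tr -> coR tr 0 y a = 0.
Proof. by move=> h; apply/rowP => j; rewrite !mxE (lin0 (tl_2 h _ _)) pairing0r oppr0. Qed.
Lemma coR_02 (tr : V -> V -> V -> V) x a : trilinear_map tr -> coR tr x 0 a = 0.
Proof. by move=> h; apply/rowP => j; rewrite !mxE (lin0 (tl_3 h _ _)) pairing0r oppr0. Qed.
Lemma coL_0a (tr : V -> V -> V -> V) x y : coL tr x y 0 = 0.
Proof. by apply/rowP => j; rewrite !mxE pairing0l oppr0. Qed.
Lemma coL_01 (tr : V -> V -> V -> V) y a : trilinear_map tr -> coL tr 0 y a = 0.
Proof. by move=> h; apply/rowP => j; rewrite !mxE (lin0 (tl_1 h _ _)) pairing0r oppr0. Qed.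
Lemma coL_02 (tr : V -> V -> V -> V) x a : trilinear_map tr -> coL tr x 0 a = 0.
Proof. by move=> h; apply/rowP => j; rewrite !mxE (lin0 (tl_2 h _ _)) pairing0r oppr0. Qed.

Lemma fwd (br brs : V -> V -> V) (tr trs : V -> V -> V -> V) :
  LieYamaguti br tr -> LieYamaguti brs trs -> matched_pair br tr brs trs ->
  manin_triple br tr brs trs (dbl_br br brs) (dbl_tr tr trs).
Proof.
move=> [hb [ht [sb [st _]]]] [hbs [hts [sbs [sts _]]]] hm.
have b0l := fun z => lin0 (bl_l hb z).
have b0r := fun z => lin0 (bl_r hb z).
have bs0l := fun z => lin0 (bl_l hbs z).
have bs0r := fun z => lin0 (bl_r hbs z).
have t01 := fun u v => lin0 (tl_1 ht u v).
have t02 := fun u v => lin0 (tl_2 ht u v).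
have t03 := fun u v => lin0 (tl_3 ht u v).
have ts01 := fun u v => lin0 (tl_1 hts u v).
have ts02 := fun u v => lin0 (tl_2 hts u v).
have ts03 := fun u v => lin0 (tl_3 hts u v).
Ltac zsimp b0l b0r bs0l bs0r t01 t02 t03 ts01 ts02 ts03 hb hbs ht hts :=
  rewrite ?b0l ?b0r ?bs0l ?bs0r ?t01 ?t02 ?t03 ?ts01 ?ts02 ?ts03
          ?coad_0a ?(coad_0x _ hb) ?(coad_0x _ hbs)
          ?coR_0a ?(coR_01 _ _ ht) ?(coR_01 _ _ hts) ?(coR_02 _ _ ht) ?(coR_02 _ _ hts)
          ?coL_0a ?(coL_01 _ _ ht) ?(coL_01 _ _ hts) ?(coL_02 _ _ ht) ?(coL_02 _ _ hts)
          ?addr0 ?add0r ?subr0 ?sub0r ?oppr0 ?addr0 ?add0r ?subr0 ?sub0r ?oppr0 ?addr0 ?add0r.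
split.
  split; first exact: hm.
  split.
    move=> a [x1 x2] [y1 y2] [z1 z2]; rewrite scalepE addpE /B0 /=.
    by rewrite !(pairingDl, pairingZl); ring.
  split.
    by move=> [x1 x2] [y1 y2]; rewrite /B0 /= addrC (pairingC x1) (pairingC x2).
  split.
    move=> [x1 x2] h; apply: pair_eq => /=; apply: pairing_eq => z.
      by have := h (0, z); rewrite Bd /= pairing0l.
    by have := h (z, 0); rewrite Bg /= pairing0l.
  split.
    move=> [x xi] [y eta] [z zeta]; rewrite /dbl_br /B0 /=.
    rewrite !(pairingDl, pairingNl, pairingDr, pairingNr).
    rewrite !coad_pl // !coad_pr //.
    rewrite (pairingC (br x y)) (pairingC (brs xi eta)) (sb z y) (sbs zeta eta) !pairingNr.
    ring.
  move=> [x xi] [y eta] [z zeta] [a al]; rewrite /dbl_tr /B0 /=.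
  rewrite !(pairingDl, pairingNl, pairingDr, pairingNr).
  rewrite !coL_pl // !coL_pr // !coR_pl // !coR_pr //.
  rewrite (pairingC (tr x y z)) (pairingC (trs xi eta zeta)); ring.
split; first by move=> x y; rewrite /B0 /= pairing0l pairing0r addr0.
split; first by move=> x y; rewrite /B0 /= pairing0l pairing0r addr0.
split.
  by move=> x y; rewrite /dbl_br;
  zsimp b0l b0r bs0l bs0r t01 t02 t03 ts01 ts02 ts03 hb hbs ht hts.
split.
  by move=> x y z; rewrite /dbl_tr;
  zsimp b0l b0r bs0l bs0r t01 t02 t03 ts01 ts02 ts03 hb hbs ht hts.
split.
  by move=> x y; rewrite /dbl_br;
  zsimp b0l b0r bs0l bs0r t01 t02 t03 ts01 ts02 ts03 hb hbs ht hts.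
split.
  by move=> x y z; rewrite /dbl_tr;
  zsimp b0l b0r bs0l bs0r t01 t02 t03 ts01 ts02 ts03 hb hbs ht hts.
move=> x1 y1 x2 y2; rewrite /dbl_tr /=.
by split; zsimp b0l b0r bs0l bs0r t01 t02 t03 ts01 ts02 ts03 hb hbs ht hts.
Qed.
End S.

Theorem proposition4p8 (F : fieldType) (n : nat)
  (charF : [pchar F] =i pred0)
  (br : 'rV[F]_n -> 'rV[F]_n -> 'rV[F]_n)
  (tr : 'rV[F]_n -> 'rV[F]_n -> 'rV[F]_n -> 'rV[F]_n)
  (brs : 'rV[F]_n -> 'rV[F]_n -> 'rV[F]_n)
  (trs : 'rV[F]_n -> 'rV[F]_n -> 'rV[F]_n -> 'rV[F]_n) :
  LieYamaguti br tr -> LieYamaguti brs trs ->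
  (matched_pair br tr brs trs <->
   exists (b : ('rV[F]_n * 'rV[F]_n)%type -> ('rV[F]_n * 'rV[F]_n)%type ->
               ('rV[F]_n * 'rV[F]_n)%type)
          (t : ('rV[F]_n * 'rV[F]_n)%type -> ('rV[F]_n * 'rV[F]_n)%type ->
               ('rV[F]_n * 'rV[F]_n)%type -> ('rV[F]_n * 'rV[F]_n)%type),
     manin_triple br tr brs trs b t)
  /\
  (forall b t, manin_triple br tr brs trs b t ->
     b = dbl_br br brs /\ t = dbl_tr tr trs).
Proof.
move=> hg hs; split.
  split; first by move=> hm; exists (dbl_br br brs), (dbl_tr tr trs); exact: fwd.
  move=> [b [t hmt]].
  rewrite /matched_pair -(uniq_b hg hs hmt) -(uniq_t hg hs hmt).
  exact: hmt.1.1.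
move=> b t hmt; split; [exact: uniq_b hg hs hmt | exact: uniq_t hg hs hmt].
Qed.
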